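(* For all terms $s,t$ and $k\in\mathbb N$: $s\Downarrow_k t$ holds if and only if $s\succ^k t$ and $t$ is an abstraction.
   Context: Terms (de Bruijn): $s::=n\mid st\mid\lambda s$. Substitution $k^k_u=u$, $n^k_u=n$ ($n\ne k$), $(st)^k_u=(s^k_u)(t^k_u)$, $(\lambda s)^k_u=\lambda(s^{k+1}_u)$. Reduction: $(\lambda s)(\lambda t)\succ s^0_{\lambda t}$; $s\succ s'\Rightarrow st\succ s't$; $t\succ t'\Rightarrow(\lambda s)t\succ(\lambda s)t'$; $\succ^k$ is $k$-fold reduction. The big-step relation $s\Downarrow_k t$ is defined inductively by: $\lambda s\Downarrow_0\lambda s$; and if $s\Downarrow_{k_1}\lambda s'$, $t\Downarrow_{k_2}\lambda t'$ and $s'^0_{\lambda t'}\Downarrow_{k_3}u$, then $st\Downarrow_{k_1+k_2+1+k_3}u$. *)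

(* Defs.v *)
From Stdlib Require Import Arith.

Inductive term : Type :=
| var : nat -> term
| app : term -> term -> term
| lam : term -> term.

(* Substitution s^k_u (no shifting, as in the paper). *)
Fixpoint subst (s : term) (k : nat) (u : term) : term :=
  match s with
  | var n => if Nat.eqb n k then u else var n
  | app s1 s2 => app (subst s1 k u) (subst s2 k u)
  | lam s1 => lam (subst s1 (S k) u)
  end.

Inductive step : term -> term -> Prop :=
| stepBeta s t : step (app (lam s) (lam t)) (subst s 0 (lam t))
| stepAppL s s' t : step s s' -> step (app s t) (app s' t)
| stepAppR s t t' : step t t' -> step (app (lam s) t) (app (lam s) t').

Inductive pow_step : nat -> term -> term -> Prop :=
| pow0 s : pow_step 0 s s
| powS k s s' t : step s s' -> pow_step k s' t -> pow_step (S k) s t.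

Inductive eval : term -> nat -> term -> Prop :=
| evalLam s : eval (lam s) 0 (lam s)
| evalApp s t s' t' u k1 k2 k3 :
    eval s k1 (lam s') -> eval t k2 (lam t') -> eval (subst s' 0 (lam t')) k3 u ->
    eval (app s t) (k1 + k2 + 1 + k3) u.

Definition is_abstraction (t : term) : Prop := exists t', t = lam t'.

(* Main.v *)
Require Import Defs.
From Stdlib Require Import Arith Lia.

Lemma pow_trans k1 k2 s t u : pow_step k1 s t -> pow_step k2 t u -> pow_step (k1 + k2) s u.
Proof. induction 1; intros; simpl; [assumption| econstructor; eauto]. Qed.

Lemma pow_appL k s s' t : pow_step k s s' -> pow_step k (app s t) (app s' t).
Proof. induction 1; econstructor; eauto using stepAppL. Qed.

Lemma pow_appR k s t t' : pow_step k t t' -> pow_step k (app (lam s) t) (app (lam s) t').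
Proof. induction 1; econstructor; eauto using stepAppR. Qed.

Lemma step_eval s s' : step s s' -> forall k u, eval s' k u -> eval s (S k) u.
Proof.
  induction 1; intros k u Hev.
  - change (S k) with (0 + 0 + 1 + k). econstructor; eauto; constructor.
  - inversion Hev; subst.
    replace (S (k1 + k2 + 1 + k3)) with (S k1 + k2 + 1 + k3) by lia.
    econstructor; eauto.
  - inversion Hev; subst. match goal with Hl : eval (lam _) _ _ |- _ => inversion Hl; subst end.
    replace (S (0 + k2 + 1 + k3)) with (0 + S k2 + 1 + k3) by lia.
    econstructor; eauto.
Qed.

Theorem lemmaA3 (s t : term) (k : nat) :
  eval s k t <-> (pow_step k s t /\ is_abstraction t).
Proof.
  split.
  - induction 1.
    + split; [constructor | eexists; reflexivity].
    + destruct IHeval1 as [P1 _], IHeval2 as [P2 _], IHeval3 as [P3 A].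
      split; [|exact A].
      replace (k1 + k2 + 1 + k3) with (k1 + (k2 + S k3)) by lia.
      apply (pow_trans _ _ _ (app (lam s') t)). apply pow_appL; eassumption.
      apply (pow_trans _ _ _ (app (lam s') (lam t'))). apply pow_appR; eassumption.
      econstructor. apply stepBeta. eassumption.
  - intros [P [t' ->]]. remember (lam t') as v. induction P; subst.
    + constructor.
    + eapply step_eval; eauto.
Qed.
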